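(* Let $(\mathbb{C},P)$ be an extensional, cauchy-complete regular doctrine with full comprehensions. Then a morphism $f:A\to B$ of $\mathbb{C}$ is a monomorphism if and only if it is a comprehension of some formula $\beta\in P(B)$ (i.e. $f=\lfloor\beta\rfloor\circ k$ for some isomorphism $k$; one may take $\beta=\exists_f\top_A$).
   Context: A regular doctrine is $(\mathbb{C},P)$, $\mathbb{C}$ non-empty with binary products, $P:\mathbb{C}^{op}\to$ inf-semilattices, with $f^*=P(f)$ having left adjoints $\exists_f$ satisfying Beck–Chevalley and Frobenius reciprocity; $\delta_A=\exists_{\langle id_A,id_A\rangle}\top_A$. Full comprehension of $\alpha\in P(A)$: $\lfloor\alpha\rfloor:X\to A$ with $\lfloor\alpha\rfloor^*\alpha=\top_X$, universal among arrows $f$ with $f^*\alpha=\top$ (unique factorization), and with $\lfloor\alpha\rfloor^*\alpha\le\lfloor\alpha\rfloor^*\beta$ iff $\alpha\le\beta$. Extensional: for parallel $f,g:X\to A$, $f=g$ iff $\top_X\le\langle f,g\rangle^*\delta_A$. A formula $F\in P(Y\times A)$ is functional from $Y$ to $A$ if $\top_Y\le\exists_{\pi_1}F$ (where $\pi_1:Y\times A\to Y$) and $\langle\pi_1,\pi_2\rangle^*F\wedge\langle\pi_1,\pi_3\rangle^*F\le\langle\pi_2,\pi_3\rangle^*\delta_A$ in $P(Y\times A\times A)$. An object $A$ is cauchy-complete if for every $Y$ and every $F$ functional from $Y$ to $A$ there is $f:Y\to A$ with $(f\times id_A)^*\delta_A=F$; the doctrine is cauchy-complete if all objects are. *)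

(* Defs.v *)
Set Implicit Arguments.
Unset Strict Implicit.

Record Cat := {
  Obj :> Type;
  Hom : Obj -> Obj -> Type;
  idm : forall A, Hom A A;
  comp : forall A B C, Hom B C -> Hom A B -> Hom A C;
  comp_id_l : forall A B (f : Hom A B), comp (idm B) f = f;
  comp_id_r : forall A B (f : Hom A B), comp f (idm A) = f;
  comp_assoc : forall A B C D (h : Hom C D) (g : Hom B C) (f : Hom A B),
      comp h (comp g f) = comp (comp h g) f
}.
Arguments Hom {c} _ _.
Arguments idm {c} _.
Arguments comp {c A B C} _ _.

Record BinProducts (C : Cat) := {
  prd : C -> C -> C;
  pr1 : forall A B, Hom (prd A B) A;
  pr2 : forall A B, Hom (prd A B) B;
  pair : forall X A B, Hom X A -> Hom X B -> Hom X (prd A B);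
  pair_pr1 : forall X A B (f : Hom X A) (g : Hom X B), comp (pr1 A B) (pair f g) = f;
  pair_pr2 : forall X A B (f : Hom X A) (g : Hom X B), comp (pr2 A B) (pair f g) = g;
  pair_uniq : forall X A B (f : Hom X A) (g : Hom X B) (h : Hom X (prd A B)),
      comp (pr1 A B) h = f -> comp (pr2 A B) h = g -> h = pair f g
}.
Arguments prd {C} _ _ _.
Arguments pr1 {C} _ _ _.
Arguments pr2 {C} _ _ _.
Arguments pair {C} _ {X A B} _ _.

(* Pullback squares:   X' --g'--> X
                        |f'        |f
                        v          v
                        Y' --g---> Y      with f o g' = g o f' *)
Definition is_pullback {C : Cat} {X' X Y' Y : C}
  (g' : Hom X' X) (f' : Hom X' Y') (f : Hom X Y) (g : Hom Y' Y) : Prop :=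
  comp f g' = comp g f' /\
  forall Z (u : Hom Z X) (v : Hom Z Y'), comp f u = comp g v ->
    exists w : Hom Z X', (comp g' w = u /\ comp f' w = v) /\
      forall w' : Hom Z X', comp g' w' = u -> comp f' w' = v -> w' = w.

Definition is_mono {C : Cat} {A B : C} (f : Hom A B) : Prop :=
  forall X (g h : Hom X A), comp f g = comp f h -> g = h.

Definition is_iso {C : Cat} {A B : C} (f : Hom A B) : Prop :=
  exists g : Hom B A, comp g f = idm A /\ comp f g = idm B.

Record RegDoctrine (C : Cat) (Pr : BinProducts C) := {
  P : C -> Type;
  le : forall A, P A -> P A -> Prop;
  le_refl : forall A (a : P A), le a a;
  le_trans : forall A (a b c : P A), le a b -> le b c -> le a c;
  le_antisym : forall A (a b : P A), le a b -> le b a -> a = b;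
  top : forall A, P A;
  top_max : forall A (a : P A), le a (top A);
  meet : forall A, P A -> P A -> P A;
  meet_lb1 : forall A (a b : P A), le (meet a b) a;
  meet_lb2 : forall A (a b : P A), le (meet a b) b;
  meet_glb : forall A (a b c : P A), le c a -> le c b -> le c (meet a b);
  reidx : forall A B, Hom A B -> P B -> P A;
  reidx_mono : forall A B (f : Hom A B) (a b : P B), le a b -> le (reidx f a) (reidx f b);
  reidx_top : forall A B (f : Hom A B), reidx f (top B) = top A;
  reidx_meet : forall A B (f : Hom A B) (a b : P B),
      reidx f (meet a b) = meet (reidx f a) (reidx f b);
  reidx_id : forall A (a : P A), reidx (idm A) a = a;
  reidx_comp : forall A B D (f : Hom A B) (g : Hom B D) (a : P D),
      reidx (comp g f) a = reidx f (reidx g a);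
  ex : forall A B, Hom A B -> P A -> P B;
  ex_adj : forall A B (f : Hom A B) (a : P A) (b : P B),
      le (ex f a) b <-> le a (reidx f b);
  beck_chevalley : forall X' X Y' Y (g' : Hom X' X) (f' : Hom X' Y')
      (f : Hom X Y) (g : Hom Y' Y),
      is_pullback g' f' f g ->
      forall a : P X, reidx g (ex f a) = ex f' (reidx g' a);
  frobenius : forall A B (f : Hom A B) (a : P A) (b : P B),
      ex f (meet a (reidx f b)) = meet (ex f a) b
}.
Arguments P {C Pr} _ _.
Arguments le {C Pr} _ {A} _ _.
Arguments top {C Pr} _ _.
Arguments meet {C Pr} _ {A} _ _.
Arguments reidx {C Pr} _ {A B} _ _.
Arguments ex {C Pr} _ {A B} _ _.

Section DoctrineNotions.
Variables (C : Cat) (Pr : BinProducts C) (D : RegDoctrine Pr).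

Definition delta (A : C) : P D (prd Pr A A) :=
  ex D (pair Pr (idm A) (idm A)) (top D A).

Definition is_full_comprehension (A : C) (alpha : P D A) (X : C) (c : Hom X A) : Prop :=
  reidx D c alpha = top D X /\
  (forall Y (f : Hom Y A), le D (top D Y) (reidx D f alpha) ->
     exists h : Hom Y X, comp c h = f /\
       forall h' : Hom Y X, comp c h' = f -> h' = h) /\
  (forall beta : P D A,
     le D (reidx D c alpha) (reidx D c beta) <-> le D alpha beta).

Definition has_full_comprehensions : Prop :=
  forall (A : C) (alpha : P D A), exists (X : C) (c : Hom X A),
    is_full_comprehension alpha c.

Definition extensional : Prop :=
  forall (X A : C) (f g : Hom X A),
    f = g <-> le D (top D X) (reidx D (pair Pr f g) (delta A)).

Definition functional (Y A : C) (F : P D (prd Pr Y A)) : Prop :=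
  let YAA := prd Pr (prd Pr Y A) A in
  let p1 : Hom YAA Y := comp (pr1 Pr Y A) (pr1 Pr (prd Pr Y A) A) in
  let p2 : Hom YAA A := comp (pr2 Pr Y A) (pr1 Pr (prd Pr Y A) A) in
  let p3 : Hom YAA A := pr2 Pr (prd Pr Y A) A in
  le D (top D Y) (ex D (pr1 Pr Y A) F) /\
  le D (meet D (reidx D (pair Pr p1 p2) F) (reidx D (pair Pr p1 p3) F))
       (reidx D (pair Pr p2 p3) (delta A)).

Definition cauchy_complete_obj (A : C) : Prop :=
  forall (Y : C) (F : P D (prd Pr Y A)), functional F ->
    exists f : Hom Y A,
      reidx D (pair Pr (comp f (pr1 Pr Y A)) (pr2 Pr Y A)) (delta A) = F.

Definition cauchy_complete : Prop := forall A : C, cauchy_complete_obj A.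

End DoctrineNotions.

(* Main.v *)
Require Import Defs.
Set Implicit Arguments.
Unset Strict Implicit.

Lemma pair_comp (C : Cat) (Pr : BinProducts C) (Z X A B : C)
  (g : Hom X A) (h : Hom X B) (m : Hom Z X) :
  comp (pair Pr g h) m = pair Pr (comp g m) (comp h m).
Proof.
  apply pair_uniq.
  - rewrite comp_assoc, pair_pr1; reflexivity.
  - rewrite comp_assoc, pair_pr2; reflexivity.
Qed.

Lemma ex_unit (C : Cat) (Pr : BinProducts C) (D : RegDoctrine Pr)
  (A B : C) (f : Hom A B) (a : P D A) : le D a (reidx D f (ex D f a)).
Proof. apply ex_adj, le_refl. Qed.

Lemma ex_mono (C : Cat) (Pr : BinProducts C) (D : RegDoctrine Pr)
  (A B : C) (f : Hom A B) (a b : P D A) : le D a b -> le D (ex D f a) (ex D f b).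
Proof. intro H. apply ex_adj. eapply le_trans; [exact H|]. apply ex_unit. Qed.

Lemma ex_comp (C : Cat) (Pr : BinProducts C) (D : RegDoctrine Pr)
  (A B E : C) (h : Hom A B) (g : Hom B E) (a : P D A) :
  ex D (comp g h) a = ex D g (ex D h a).
Proof.
  apply le_antisym.
  - apply ex_adj. rewrite reidx_comp.
    eapply le_trans; [apply (ex_unit (D:=D) h)|].
    apply reidx_mono. apply ex_unit.
  - apply ex_adj. apply ex_adj. rewrite <- reidx_comp. apply ex_unit.
Qed.

Lemma ex_id (C : Cat) (Pr : BinProducts C) (D : RegDoctrine Pr)
  (A : C) (a : P D A) : ex D (idm A) a = a.
Proof.
  apply le_antisym.
  - apply ex_adj. rewrite reidx_id. apply le_refl.
  - pose proof (ex_unit (D:=D) (idm A) a) as H. rewrite reidx_id in H. exact H.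
Qed.

Lemma mono_reidx_ex (C : Cat) (Pr : BinProducts C) (D : RegDoctrine Pr)
  (X B : C) (c : Hom X B) (a : P D X) : is_mono c ->
  reidx D c (ex D c a) = a.
Proof.
  intro Hm.
  assert (Hpb : is_pullback (idm X) (idm X) c c).
  { split. reflexivity.
    intros Z u v Huv. exists u. split.
    - split. apply comp_id_l. rewrite comp_id_l. apply Hm. exact Huv.
    - intros w' H1 H2. rewrite comp_id_l in H1. exact H1. }
  rewrite (beck_chevalley (r:=D) Hpb). rewrite reidx_id. apply ex_id.
Qed.

Lemma comp_is_mono (C : Cat) (Pr : BinProducts C) (D : RegDoctrine Pr)
  (B X : C) (beta : P D B) (c : Hom X B) :
  is_full_comprehension beta c -> is_mono c.
Proof.
  intros [H1 [H2 H3]] Z g h E.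
  assert (Hg : le D (top D Z) (reidx D (comp c g) beta)).
  { rewrite reidx_comp, H1, reidx_top. apply le_refl. }
  destruct (H2 Z (comp c g) Hg) as [w [_ Hu]].
  rewrite (Hu g eq_refl). symmetry. apply Hu. symmetry. exact E.
Qed.

Lemma top_meet_l (C : Cat) (Pr : BinProducts C) (D : RegDoctrine Pr)
  (Z Y : C) (m : Hom Z Y) (a b : P D Y) :
  le D (top D Z) (reidx D m (meet D a b)) -> le D (top D Z) (reidx D m a).
Proof.
  intro H. eapply le_trans; [exact H|]. apply reidx_mono, meet_lb1.
Qed.

Lemma top_meet_r (C : Cat) (Pr : BinProducts C) (D : RegDoctrine Pr)
  (Z Y : C) (m : Hom Z Y) (a b : P D Y) :
  le D (top D Z) (reidx D m (meet D a b)) -> le D (top D Z) (reidx D m b).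
Proof.
  intro H. eapply le_trans; [exact H|]. apply reidx_mono, meet_lb2.
Qed.

Lemma semantic_le (C : Cat) (Pr : BinProducts C) (D : RegDoctrine Pr)
  (Hcomp : has_full_comprehensions D) (Y : C) (phi psi : P D Y) :
  (forall Z (m : Hom Z Y), le D (top D Z) (reidx D m phi) ->
      le D (top D Z) (reidx D m psi)) -> le D phi psi.
Proof.
  intro H. destruct (Hcomp Y phi) as [Z [m [H1 [_ H3]]]].
  apply H3. rewrite H1. apply H. rewrite H1. apply le_refl.
Qed.

Theorem lemma5p1 (C : Cat) (Pr : BinProducts C) (D : RegDoctrine Pr)
  (Cne : inhabited (Obj C))
  (Hext : extensional D) (Hcc : cauchy_complete D)
  (Hcomp : has_full_comprehensions D)
  (A B : C) (f : Hom A B) :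
  is_mono f <->
  exists (beta : P D B) (X : C) (c : Hom X B) (k : Hom A X),
    is_full_comprehension beta c /\ is_iso k /\ f = comp c k.
Proof.
  split.
  - intro Hf.
    set (beta := ex D f (top D A)).
    destruct (Hcomp B beta) as [X [c Hc]].
    pose proof (comp_is_mono Hc) as Hcm.
    destruct Hc as [Hc1 [Hc2 Hc3]].
    destruct (Hc2 A f (ex_unit f (top D A))) as [k [Hk _]].
    assert (Hkm : is_mono k).
    { intros Z g h E. apply Hf. rewrite <- Hk, <- !comp_assoc, E. reflexivity. }
    assert (Hexk : ex D k (top D A) = top D X).
    { rewrite <- (mono_reidx_ex (ex D k (top D A)) Hcm).
      rewrite <- ex_comp, Hk. exact Hc1. }
    set (F := reidx D (pair Pr (pr1 Pr X A) (comp k (pr2 Pr X A))) (delta D X)).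
    assert (HF_kid : reidx D (pair Pr k (idm A)) F = reidx D (pair Pr k k) (delta D X)).
    { unfold F. rewrite <- reidx_comp, pair_comp, pair_pr1, <- comp_assoc, pair_pr2,
        comp_id_r. reflexivity. }
    assert (Hfun : functional F).
    { split.
      - rewrite <- Hexk.
        assert (E : k = comp (pr1 Pr X A) (pair Pr k (idm A))) by (rewrite pair_pr1; reflexivity).
        rewrite E. rewrite ex_comp. apply ex_mono.
        apply ex_adj. rewrite HF_kid. apply Hext. reflexivity.
      - apply (semantic_le Hcomp). intros Z m Hm.
        pose proof (top_meet_l Hm) as Ha. pose proof (top_meet_r Hm) as Hb.
        unfold F in Ha, Hb.
        rewrite <- !reidx_comp.
        repeat first [rewrite <- reidx_comp in Ha | rewrite pair_comp in Ha
          | rewrite <- comp_assoc in Ha | rewrite pair_pr1 in Ha | rewrite pair_pr2 in Ha].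
        repeat first [rewrite <- reidx_comp in Hb | rewrite pair_comp in Hb
          | rewrite <- comp_assoc in Hb | rewrite pair_pr1 in Hb | rewrite pair_pr2 in Hb].
        repeat first [rewrite pair_comp | rewrite <- comp_assoc].
        apply Hext. apply Hext in Ha. apply Hext in Hb.
        apply Hkm. rewrite <- Ha, <- Hb. reflexivity. }
    destruct (Hcc A X F Hfun) as [g Hg].
    exists beta, X, c, k. split; [|split].
    + split; [exact Hc1|split; assumption].
    + exists g. split.
      * apply Hext.
        assert (E : reidx D (pair Pr k (idm A)) F = reidx D (pair Pr (comp g k) (idm A)) (delta D A)).
        { rewrite <- Hg, <- reidx_comp, pair_comp, <- comp_assoc, !pair_pr1, pair_pr2.
          reflexivity. }
        rewrite <- E, HF_kid. apply Hext. reflexivity.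
      * apply eq_sym. apply Hext.
        assert (E : reidx D (pair Pr (idm X) g) F = reidx D (pair Pr (idm X) (comp k g)) (delta D X)).
        { unfold F. rewrite <- reidx_comp, pair_comp, pair_pr1, <- comp_assoc, pair_pr2.
          reflexivity. }
        rewrite <- E, <- Hg, <- reidx_comp, pair_comp, <- comp_assoc, !pair_pr1, pair_pr2,
          comp_id_r. apply Hext. reflexivity.
    + symmetry. exact Hk.
  - intros [beta [X [c [k [Hc [[g [Hg1 Hg2]] E]]]]]].
    pose proof (comp_is_mono Hc) as Hcm.
    intros Z u v Huv. subst f.
    rewrite <- !comp_assoc in Huv. apply Hcm in Huv.
    rewrite <- (comp_id_l u), <- (comp_id_l v), <- Hg1, <- !comp_assoc, Huv.
    reflexivity.
Qed.
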